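(* Let $1<w\le 2$ and $1<h\le 2$, let $n\ge 2$ and $\frac12\le y_1<\dots<y_n\le h-\frac12$. In every reasonable layout of this instance, the bottom square is not contained in the bounding box of the other squares.
   Context: The instance is the strip $T=[0,w]\times[0,h]$ with the given $y_i$. A layout is a pair $(\mathbf x,\prec)$ where $\mathbf x=(x_1,\dots,x_n)$ with $x_i\in[\frac12,w-\frac12]$, and $\prec$ is a total order (stacking order) on the squares $s_1,\dots,s_n$, where $s_i$ is the closed axis-parallel unit square with centre $(x_i,y_i)$. If $s_i\prec s_j$ we say $s_j$ is in front of $s_i$ and $s_i$ is behind $s_j$; the bottom square is the $\prec$-minimal square. A point $p$ on the boundary of $s_i$ is visible if every square $s_j$ ($j\neq i$) containing $p$ is behind $s_i$. The visible perimeter of $s_i$ is the total length of its visible boundary points; the gap of $s_i$ is its visible perimeter minus $2$, the gap of a layout is the minimum of the gaps of its squares, and a layout is reasonable if its gap is positive. The bounding box of a collection of squares is the smallest axis-parallel rectangle containing them. *)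

(* Defs.v *)
From HB Require Import structures.
From mathcomp Require Import all_boot all_order all_algebra.
From mathcomp Require Import all_classical all_reals.
From mathcomp Require Import ereal lebesgue_measure.
Set Implicit Arguments. Unset Strict Implicit. Unset Printing Implicit Defensive.
Import Order.TTheory GRing.Theory Num.Theory.
Local Open Scope classical_set_scope.
Local Open Scope ring_scope.

Section Defs.
Variables (R : realType) (n : nat).

Definition unit_square (cx cy : R) : set (R * R) :=
  [set p | `|p.1 - cx| <= 1/2 /\ `|p.2 - cy| <= 1/2].

(* [prec i j] means s_i is behind s_j; a stacking order is a strict total order *)
Definition stacking_order (prec : rel 'I_n) : Prop :=
  [/\ forall i, ~~ prec i i,
      forall i j k, prec i j -> prec j k -> prec i k &
      forall i j, i != j -> prec i j || prec j i].

Definition is_layout (w : R) (x : 'I_n -> R) (prec : rel 'I_n) : Prop :=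
  (forall i, 1/2 <= x i <= w - 1/2) /\ stacking_order prec.

Definition square (x y : 'I_n -> R) (i : 'I_n) := unit_square (x i) (y i).

Definition visible (x y : 'I_n -> R) (prec : rel 'I_n) (i : 'I_n) (p : R * R) :=
  forall j, j != i -> square x y j p -> prec j i.

Definition edge (x y : 'I_n -> R) (i : 'I_n) (k : 'I_4) (t : R) : R * R :=
  if val k == 0%N then (x i - 1/2 + t, y i - 1/2)
  else if val k == 1%N then (x i - 1/2 + t, y i + 1/2)
  else if val k == 2%N then (x i - 1/2, y i - 1/2 + t)
  else (x i + 1/2, y i - 1/2 + t).

Definition visible_perimeter (x y : 'I_n -> R) (prec : rel 'I_n) (i : 'I_n)
  : \bar R :=
  (\sum_(k < 4) lebesgue_measure
      [set t : R | (0 <= t <= 1)%R /\ visible x y prec i (edge x y i k t)])%E.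

(* gap of s_i = visible perimeter - 2 (visible perimeter is finite, <= 4) *)
Definition gap (x y : 'I_n -> R) (prec : rel 'I_n) (i : 'I_n) : R :=
  fine (visible_perimeter x y prec i) - 2.

(* the gap of the layout (minimum of the gaps) is positive *)
Definition reasonable (x y : 'I_n -> R) (prec : rel 'I_n) : Prop :=
  forall i, 0 < gap x y prec i.

Definition is_bottom (prec : rel 'I_n) (b : 'I_n) : Prop :=
  forall j, j != b -> prec b j.

Definition rectangle (a1 a2 c1 c2 : R) : set (R * R) :=
  [set p | a1 <= p.1 <= a2 /\ c1 <= p.2 <= c2].

(* s_b lies in the bounding box (the smallest axis-parallel rectangle
   containing the squares s_j, j <> b), i.e. in every axis-parallel
   rectangle containing them *)
Definition in_bbox_of_others (x y : 'I_n -> R) (b : 'I_n) : Prop :=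
  forall a1 a2 c1 c2,
    (forall j, j != b -> square x y j `<=` rectangle a1 a2 c1 c2) ->
    square x y b `<=` rectangle a1 a2 c1 c2.

End Defs.

(* Main.v *)
Require Import Defs.
From HB Require Import structures.
From mathcomp Require Import all_boot all_order all_algebra.
From mathcomp Require Import all_classical all_reals.
From mathcomp Require Import ereal lebesgue_measure measure_extension lebesgue_stieltjes_measure.
From mathcomp Require Import lra measure.
Import Order.TTheory GRing.Theory Num.Theory.
Local Open Scope classical_set_scope.
Local Open Scope ring_scope.

Section Meas.
Variable R : realType.

Definition U01 : set R := [set t | 0 <= t <= 1].
Definition Ua (a : R) : set R := [set t | 0 <= t <= 1 /\ ~ (a <= t <= a + 1)].

Lemma leb_mono {A B : set R} : A `<=` B ->
  (lebesgue_measure A <= lebesgue_measure B)%E.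
Proof. move=> AB. exact: le_mu_ext. Qed.

Lemma meas_le1 (S : set R) : S `<=` U01 -> (lebesgue_measure S <= 1%:E)%E.
Proof.
move=> hS; apply: (le_trans (leb_mono (B := [set` `[0, 1]%R]) _)).
  by move=> t /hS; rewrite /U01 /= in_itv.
rewrite lebesgue_measure_itv /= lte_fin ltr01 /= sube0 //.
Qed.

Lemma meas_empty (S : set R) : S `<=` set0 -> (lebesgue_measure S <= 0%:E)%E.
Proof.
move=> hS; apply: (le_trans (leb_mono hS)); by rewrite measure0.
Qed.

Lemma meas_side (S : set R) (a : R) :
  -1 <= a <= 1 -> S `<=` Ua a -> (lebesgue_measure S <= `|a|%:E)%E.
Proof.
move=> /andP[ha1 ha2] hS.
have [a0|a0] := leP a 0.
  apply: (le_trans (leb_mono (B := [set` `](a + 1), 1]%R]) _)).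
    move=> t /hS [/andP[t0 t1] nt]; rewrite /= in_itv /= t1 andbT.
    rewrite ltNge; apply/negP => ta; apply: nt; apply/andP; split; lra.
  rewrite lebesgue_measure_itv /= lte_fin.
  case: ifP => _; last by rewrite lee_fin.
  rewrite -EFinD lee_fin ler0_norm //; lra.
apply: (le_trans (leb_mono (B := [set` `[0, a[%R]) _)).
  move=> t /hS [/andP[t0 t1] nt]; rewrite /= in_itv /= t0 /=.
  rewrite ltNge; apply/negP => ta; apply: nt; apply/andP; split; lra.
rewrite lebesgue_measure_itv /= lte_fin.
case: ifP => _; last by rewrite lee_fin.
rewrite -EFinD lee_fin ger0_norm; lra.
Qed.

Lemma pair_lemma (S0 S1 : set R) (a1 a2 : R) (s1 s2 : bool) :
  -1 <= a1 <= 0 -> 0 <= a2 <= 1 -> a2 - a1 <= 1 ->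
  S0 `<=` U01 -> S1 `<=` U01 ->
  (if s1 then S1 else S0) `<=` Ua a1 -> (if s2 then S1 else S0) `<=` Ua a2 ->
  (lebesgue_measure S0 + lebesgue_measure S1 <= 1%:E)%E.
Proof.
move=> /andP[h1 h2] /andP[h3 h4] h5 hS0 hS1.
case: s1; case: s2 => /= hA hB.
- rewrite -(add0e 1%:E) addeC; apply: leeD; first exact: meas_le1.
  apply: meas_empty.
  move=> t ht; have [/andP[t0 t1] n1] := hA t ht; have [_ n2] := hB t ht.
  have [ta|ta] := leP t (a1 + 1).
    by apply: n1; apply/andP; split; lra.
  by apply: n2; apply/andP; split; lra.
- have e1 := @meas_side S0 a2 ltac:(apply/andP; split; lra) hB.
  have e2 := @meas_side S1 a1 ltac:(apply/andP; split; lra) hA.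
  apply: (le_trans (leeD e1 e2)).
  rewrite -EFinD lee_fin (ler0_norm h2) (ger0_norm h3); lra.
- have e1 := @meas_side S0 a1 ltac:(apply/andP; split; lra) hA.
  have e2 := @meas_side S1 a2 ltac:(apply/andP; split; lra) hB.
  apply: (le_trans (leeD e1 e2)).
  rewrite -EFinD lee_fin (ler0_norm h2) (ger0_norm h3); lra.
- rewrite -(add0e 1%:E); apply: leeD; last exact: meas_le1.
  apply: meas_empty.
  move=> t ht; have [/andP[t0 t1] n1] := hA t ht; have [_ n2] := hB t ht.
  have [ta|ta] := leP t (a1 + 1).
    by apply: n1; apply/andP; split; lra.
  by apply: n2; apply/andP; split; lra.
Qed.

Definition Vset {n : nat} (x y : 'I_n -> R) (prec : rel 'I_n) (b : 'I_n) (k : 'I_4) :=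
  [set t : R | (0 <= t <= 1) /\ visible x y prec b (edge x y b k t)].

Lemma bottom_cover (n : nat) (x y : 'I_n -> R) (prec : rel 'I_n) (b j : 'I_n)
  (k : 'I_4) (a : R) :
  j != b -> ~~ prec j b ->
  (forall t, 0 <= t <= 1 -> a <= t <= a + 1 -> square x y j (edge x y b k t)) ->
  Vset x y prec b k `<=` Ua a.
Proof.
move=> jb npj hc t [t01 vis]; split => // hta.
by move/negP: npj; apply; apply: vis => //; apply: hc.
Qed.

Lemma vis_U01 (n : nat) (x y : 'I_n -> R) (prec : rel 'I_n) (b : 'I_n) (k : 'I_4) :
  Vset x y prec b k `<=` U01.
Proof. by move=> t []. Qed.

End Meas.
Arguments Vset {R n}.
Arguments bottom_cover {R n x y prec b j k a}.

Section Pairs.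
Variables (R : realType) (n : nat) (x y : 'I_n -> R) (prec : rel 'I_n) (b : 'I_n).
Hypothesis npj : forall j, j != b -> ~~ prec j b.
Let in1 (r : R) := 1/2 <= r <= 3/2.

Lemma pair_H (jmin jmax : 'I_n) : jmin != b -> jmax != b ->
  in1 (x b) -> in1 (x jmin) -> in1 (x jmax) -> in1 (y b) -> in1 (y jmin) -> in1 (y jmax) ->
  x jmin <= x b -> x b <= x jmax ->
  forall k0 k1 : 'I_4, val k0 = 0%N -> val k1 = 1%N ->
   (lebesgue_measure (Vset x y prec b k0) + lebesgue_measure (Vset x y prec b k1) <= 1)%E.
Proof.
move=> jminb jmaxb /andP[? ?] /andP[? ?] /andP[? ?] /andP[? ?] /andP[? ?] /andP[? ?] c1 c3.
  move=> k0 k1 e0 e1.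
  apply: (@pair_lemma R _ _ (x jmin - x b) (x jmax - x b) (y b <= y jmin) (y b <= y jmax)).
  - apply/andP; split; lra.
  - apply/andP; split; lra.
  - lra.
  - exact: vis_U01.
  - exact: vis_U01.
  - case: ifP => hyj.
    + apply: (bottom_cover jminb (npj _ jminb)) => t /andP[? ?] /andP[? ?].
      rewrite /square /unit_square /edge e1 /= !ler_norml; split; apply/andP; split; lra.
    + move/negbT: hyj; rewrite -ltNge => hyj.
      apply: (bottom_cover jminb (npj _ jminb)) => t /andP[? ?] /andP[? ?].
      rewrite /square /unit_square /edge e0 /= !ler_norml; split; apply/andP; split; lra.
  - case: ifP => hyj.
    + apply: (bottom_cover jmaxb (npj _ jmaxb)) => t /andP[? ?] /andP[? ?].
      rewrite /square /unit_square /edge e1 /= !ler_norml; split; apply/andP; split; lra.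
    + move/negbT: hyj; rewrite -ltNge => hyj.
      apply: (bottom_cover jmaxb (npj _ jmaxb)) => t /andP[? ?] /andP[? ?].
      rewrite /square /unit_square /edge e0 /= !ler_norml; split; apply/andP; split; lra.
Qed.

Lemma pair_V (kmin kmax : 'I_n) : kmin != b -> kmax != b ->
  in1 (x b) -> in1 (x kmin) -> in1 (x kmax) -> in1 (y b) -> in1 (y kmin) -> in1 (y kmax) ->
  y kmin <= y b -> y b <= y kmax ->
  forall k2 k3 : 'I_4, val k2 = 2%N -> val k3 = 3%N ->
   (lebesgue_measure (Vset x y prec b k2) + lebesgue_measure (Vset x y prec b k3) <= 1)%E.
Proof.
move=> kminb kmaxb /andP[? ?] /andP[? ?] /andP[? ?] /andP[? ?] /andP[? ?] /andP[? ?] c2 c4.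
  move=> k2 k3 e2 e3.
  apply: (@pair_lemma R _ _ (y kmin - y b) (y kmax - y b) (x b <= x kmin) (x b <= x kmax)).
  - apply/andP; split; lra.
  - apply/andP; split; lra.
  - lra.
  - exact: vis_U01.
  - exact: vis_U01.
  - case: ifP => hyj.
    + apply: (bottom_cover kminb (npj _ kminb)) => t /andP[? ?] /andP[? ?].
      rewrite /square /unit_square /edge e3 /= !ler_norml; split; apply/andP; split; lra.
    + move/negbT: hyj; rewrite -ltNge => hyj.
      apply: (bottom_cover kminb (npj _ kminb)) => t /andP[? ?] /andP[? ?].
      rewrite /square /unit_square /edge e2 /= !ler_norml; split; apply/andP; split; lra.
  - case: ifP => hyj.
    + apply: (bottom_cover kmaxb (npj _ kmaxb)) => t /andP[? ?] /andP[? ?].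
      rewrite /square /unit_square /edge e3 /= !ler_norml; split; apply/andP; split; lra.
    + move/negbT: hyj; rewrite -ltNge => hyj.
      apply: (bottom_cover kmaxb (npj _ kmaxb)) => t /andP[? ?] /andP[? ?].
      rewrite /square /unit_square /edge e2 /= !ler_norml; split; apply/andP; split; lra.
Qed.
End Pairs.

Theorem proposition3 (R : realType) (w h : R) (n : nat) (y : 'I_n -> R) :
  1 < w <= 2 -> 1 < h <= 2 -> (2 <= n)%N ->
  (forall i, 1/2 <= y i <= h - 1/2) ->
  (forall i j : 'I_n, (i < j)%N -> y i < y j) ->
  forall (x : 'I_n -> R) (prec : rel 'I_n),
    is_layout w x prec -> reasonable x y prec ->
    forall b : 'I_n, is_bottom prec b -> ~ in_bbox_of_others x y b.
Proof.
move=> /andP[w1 w2] /andP[h1 h2] hn hy _ x prec [hx [irr tr _]] hreas b hbot hbb.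
have npj : forall j, j != b -> ~~ prec j b.
  move=> j jb; apply/negP => pjb; move: (irr b); rewrite (tr _ _ _ (hbot j jb) pjb).
  by [].
have [j0 hj0] : exists j0 : 'I_n, j0 != b.
  have h0 : (0 < n)%N by apply: leq_trans hn.
  case: (eqVneq (Ordinal h0) b) => [e|ne]; last by exists (Ordinal h0).
  exists (Ordinal hn); rewrite -e; apply/eqP => /(congr1 val) /=; by [].
case: (arg_minP (P := fun j => j != b) x hj0) => jmin jminb hjmin.
case: (arg_maxP (P := fun j => j != b) x hj0) => jmax jmaxb hjmax.
case: (arg_minP (P := fun j => j != b) y hj0) => kmin kminb hkmin.
case: (arg_maxP (P := fun j => j != b) y hj0) => kmax kmaxb hkmax.
have hrect := hbb (x jmin - 1/2) (x jmax + 1/2) (y kmin - 1/2) (y kmax + 1/2).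
have hrp : forall j, j != b -> square x y j `<=`
    rectangle (x jmin - 1/2) (x jmax + 1/2) (y kmin - 1/2) (y kmax + 1/2).
  move=> j jb p; rewrite /square /unit_square /rectangle /= !ler_norml.
  move=> [/andP[? ?] /andP[? ?]].
  have := hjmin j jb; have := hjmax j jb; have := hkmin j jb; have := hkmax j jb.
  move=> /= ? ? ? ?.
  split; apply/andP; split; lra.
have hsq : forall e1 e2 : R, -1 <= e1 <= 1 -> -1 <= e2 <= 1 ->
    square x y b (x b + e1/2, y b + e2/2).
  move=> e1 e2 /andP[? ?] /andP[? ?].
  rewrite /square /unit_square /= !ler_norml; split; apply/andP; split; lra.
have [/andP[c1 _] /andP[c2 _]] := hbb _ _ _ _ hrp _ (hsq (-1) (-1) ltac:(apply/andP; split; lra) ltac:(apply/andP; split; lra)).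
have [/andP[_ c3] /andP[_ c4]] := hbb _ _ _ _ hrp _ (hsq 1 1 ltac:(apply/andP; split; lra) ltac:(apply/andP; split; lra)).
move: c1 c2 c3 c4 => /= c1 c2 c3 c4.
have in1x : forall i, 1/2 <= x i <= 3/2.
  by move=> i; have /andP[? ?] := hx i; apply/andP; split; lra.
have in1y : forall i, 1/2 <= y i <= 3/2.
  by move=> i; have /andP[? ?] := hy i; apply/andP; split; lra.
have HH := @pair_H _ _ x y prec b npj jmin jmax jminb jmaxb (in1x b) (in1x jmin) (in1x jmax)
  (in1y b) (in1y jmin) (in1y jmax) ltac:(lra) ltac:(lra).
have VV := @pair_V _ _ x y prec b npj kmin kmax kminb kmaxb (in1x b) (in1x kmin) (in1x kmax)
  (in1y b) (in1y kmin) (in1y kmax) ltac:(lra) ltac:(lra).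
have HP : (visible_perimeter x y prec b <= 2%:E)%E.
  rewrite /visible_perimeter !big_ord_recl big_ord0 adde0 addeA.
  have -> : (2%:E = 1%:E + 1%:E :> \bar R)%E by rewrite -EFinD; congr (_%:E); lra.
  by apply: leeD; [apply: HH | apply: VV].
have := hreas b; rewrite /gap.
move: HP; case: (visible_perimeter x y prec b) => [r| |] //=; rewrite ?lee_fin => HP; lra.
Qed.
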